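(* Let $N\ge1$, $K_{des}>0$, and let $\Omega_P,\Omega_S\subset[0,\pi]$ be disjoint nonempty closed sets, each a finite union of closed intervals of positive length. With $\Delta_{P,res}(K)$ as defined below, and $$\Delta_P(K)=\frac{8K_{des}^2K}{K^2+16K_{des}^4-8K_{des}^2},$$ there exists exactly one $K\ge 4K_{des}(K_{des}+1)$ such that $\Delta_{P,res}(K)=\Delta_P(K)$. Moreover, on $[4K_{des}(K_{des}+1),\infty)$ one has $\Delta_{P,res}(K)<\Delta_P(K)$ for $K$ smaller than this value and $\Delta_{P,res}(K)>\Delta_P(K)$ for $K$ larger than it.
   Context: Let $D(\omega)=1$ on $\Omega_P$ and $D(\omega)=0$ on $\Omega_S$. For $K>0$ let $W_K(\omega)=1$ on $\Omega_P$ and $W_K(\omega)=K$ on $\Omega_S$, and $$\Delta_{P,res}(K)=\min_{c_0,\dots,c_N\in\mathbb{R}}\ \max_{\omega\in\Omega_P\cup\Omega_S}\Bigl|W_K(\omega)\Bigl(\sum_{n=0}^N c_n\cos(n\omega)-D(\omega)\Bigr)\Bigr|,$$ the minimax weighted error of the optimal even-symmetric (zero-phase) sequence of order $2N$ approximating $D$ with weight $W_K$. *)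

(* Defs.v *)
From Stdlib Require Import Reals Lra List ClassicalEpsilon.
Open Scope R_scope.

Definition in_band (L : list (R * R)) (w : R) : Prop :=
  exists p, In p L /\ fst p <= w <= snd p.

Definition good_band (L : list (R * R)) : Prop :=
  L <> nil /\ forall p, In p L -> 0 <= fst p /\ fst p < snd p /\ snd p <= PI.

Definition cospoly (N : nat) (c : nat -> R) (w : R) : R :=
  sum_f_R0 (fun n => c n * cos (INR n * w)) N.

(* Desired response D (1 on Omega_P, 0 on Omega_S) and weight W_K
   (1 on Omega_P, K on Omega_S); meaningful on the (disjoint) union. *)
Definition Dresp (LP : list (R * R)) (w : R) : R :=
  if excluded_middle_informative (in_band LP w) then 1 else 0.

Definition Wght (LP : list (R * R)) (K w : R) : R :=
  if excluded_middle_informative (in_band LP w) then 1 else K.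

Definition werr (LP : list (R * R)) (N : nat) (K : R) (c : nat -> R) (w : R) : R :=
  Rabs (Wght LP K w * (cospoly N c w - Dresp LP w)).

Definition is_max_err (LP LS : list (R * R)) (N : nat) (K : R) (c : nat -> R) (e : R) : Prop :=
  (forall w, (in_band LP w \/ in_band LS w) -> werr LP N K c w <= e) /\
  (exists w, (in_band LP w \/ in_band LS w) /\ werr LP N K c w = e).

Definition is_minimax (LP LS : list (R * R)) (N : nat) (K d : R) : Prop :=
  (exists c, is_max_err LP LS N K c d) /\
  (forall c e, is_max_err LP LS N K c e -> d <= e).

Definition Delta_P_res (LP LS : list (R * R)) (N : nat) (K : R) : R :=
  epsilon (inhabits 0) (is_minimax LP LS N K).

Definition Delta_P (Kdes K : R) : R :=
  8 * Kdes ^ 2 * K / (K ^ 2 + 16 * Kdes ^ 4 - 8 * Kdes ^ 2).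

(* Main.v *)
Require Import Defs.
From Stdlib Require Import Reals Lra List ClassicalEpsilon Lia.
Open Scope R_scope.

Lemma absle a b : Rabs a <= b -> -b <= a /\ a <= b.
Proof. unfold Rabs; destruct (Rcase_abs a); lra. Qed.
Lemma abs0 a : Rabs a <= 0 -> a = 0.
Proof. unfold Rabs; destruct (Rcase_abs a); lra. Qed.

Lemma lip_cont f x r L : 0 < r ->
  (forall y, Rabs (y - x) < r -> Rabs (f y - f x) <= L * Rabs (y - x)) ->
  continuity_pt f x.
Proof.
  intros Hr H. unfold continuity_pt, continue_in, limit1_in, limit_in.
  intros eps He. exists (Rmin r (eps/(Rabs L + 1))). split.
  { apply Rmin_pos; auto. apply Rdiv_lt_0_compat; auto.
    pose proof (Rabs_pos L); lra. }
  intros y [_ Hy]. unfold R_dist in *; simpl in *. unfold R_dist in *.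
  pose proof (Rmin_l r (eps / (Rabs L + 1))).
  pose proof (Rmin_r r (eps / (Rabs L + 1))).
  assert (Hy1 : Rabs (y - x) < r) by lra.
  specialize (H y Hy1).
  pose proof (Rabs_pos L). pose proof (Rabs_pos (y-x)).
  pose proof (Rle_abs L).
  assert (Rabs (y - x) * (Rabs L + 1) < eps).
  { assert (Rabs (y-x) < eps / (Rabs L + 1)) by lra.
    apply Rmult_lt_reg_r with (/ (Rabs L + 1)). apply Rinv_0_lt_compat; lra.
    rewrite Rmult_assoc, Rinv_r by lra. lra. }
  nra.
Qed.

Fixpoint ssum (n : nat) (g : nat -> R) : R :=
  match n with O => 0 | S m => ssum m g + g m end.

Lemma ssum_ext n g h : (forall i, (i < n)%nat -> g i = h i) -> ssum n g = ssum n h.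
Proof. induction n; simpl; intros H; auto. rewrite IHn by (intros; apply H; lia).
  rewrite H by lia. auto. Qed.

Lemma ssum_nonneg n g : (forall i, (i < n)%nat -> 0 <= g i) -> 0 <= ssum n g.
Proof. induction n; simpl; intros H. lra. pose proof (H n ltac:(lia)).
  pose proof (IHn ltac:(intros; apply H; lia)). lra. Qed.

Lemma ssum_sumf g N : sum_f_R0 g N = ssum (S N) g.
Proof. induction N; simpl; auto. lra. simpl in IHN. rewrite IHN. auto. Qed.

Definition inbox n (lo hi : nat -> R) (c : nat -> R) :=
  forall i, (i < n)%nat -> lo i <= c i <= hi i.

Definition upd (c : nat -> R) (n : nat) (x : R) : nat -> R :=
  fun i => if Nat.eqb i n then x else c i.

Lemma min_box n : forall (f : (nat -> R) -> R) L lo hi,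
  (forall i, lo i <= hi i) ->
  (forall c c', Rabs (f c - f c') <= L * ssum n (fun i => Rabs (c i - c' i))) ->
  exists cs, inbox n lo hi cs /\ forall c, inbox n lo hi c -> f cs <= f c.
Proof.
  induction n; intros f L lo hi Hlh Hf.
  - exists lo. split. intros i Hi; lia.
    intros c _. specialize (Hf c lo). simpl in Hf. rewrite Rmult_0_r in Hf.
    apply abs0 in Hf. lra.
  - set (g := fun x c => f (upd c n x)).
    assert (Hg : forall x, forall c c', Rabs (g x c - g x c') <=
        L * ssum n (fun i => Rabs (c i - c' i))).
    { intros x c c'. unfold g. eapply Rle_trans. apply Hf. simpl.
      unfold upd. rewrite Nat.eqb_refl. replace (x - x) with 0 by ring.
      rewrite Rabs_R0, Rplus_0_r.
      right. f_equal. apply ssum_ext. intros i Hi.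
      destruct (Nat.eqb_spec i n); [lia|auto]. }
    assert (Hex : forall x, exists cs, inbox n lo hi cs /\
        forall c, inbox n lo hi c -> g x cs <= g x c).
    { intros x. apply (IHn (g x) L lo hi Hlh (Hg x)). }
    destruct (choice _ Hex) as [csf Hcsf].
    set (h := fun x => g x (csf x)).
    assert (Hh : forall x y, Rabs (h x - h y) <= Rabs L * Rabs (x - y)).
    { assert (Hgx : forall x y c, Rabs (g x c - g y c) <= Rabs L * Rabs (x - y)).
      { intros x y c. unfold g. eapply Rle_trans. apply Hf.
        simpl. unfold upd. rewrite Nat.eqb_refl.
        rewrite (ssum_ext n _ (fun _ => 0)).
        2:{ intros i Hi. destruct (Nat.eqb_spec i n); [lia|].
            replace (c i - c i) with 0 by ring. apply Rabs_R0. }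
        assert (ssum n (fun _ => 0) = 0) as ->.
        { clear. induction n; simpl; auto. rewrite IHn. ring. }
        rewrite Rplus_0_l. apply Rmult_le_compat_r. apply Rabs_pos. apply Rle_abs. }
      assert (Hone : forall x y, h x <= h y + Rabs L * Rabs (x - y)).
      { intros x y. unfold h. destruct (Hcsf x) as [_ Hx]. destruct (Hcsf y) as [Hy _].
        specialize (Hx (csf y) Hy). specialize (Hgx x y (csf y)).
        apply absle in Hgx. lra. }
      intros x y. apply Rabs_le. pose proof (Hone x y). pose proof (Hone y x).
      rewrite Rabs_minus_sym in H0. lra. }
    destruct (continuity_ab_min h (lo n) (hi n) (Hlh n)) as [xs [Hxs1 Hxs2]].
    { intros c0 _. apply (lip_cont _ _ 1 (Rabs L)). lra.
      intros y _. apply Hh. }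
    exists (upd (csf xs) n xs). split.
    + intros i Hi. unfold upd. destruct (Nat.eqb_spec i n). subst; auto.
      destruct (Hcsf xs) as [Hb _]. apply Hb. lia.
    + intros c Hc. change (f (upd (csf xs) n xs)) with (h xs).
      assert (Hcb : inbox n lo hi c) by (intros i Hi; apply Hc; lia).
      assert (E : f c = g (c n) c).
      { unfold g. specialize (Hf c (upd c n (c n))).
        rewrite (ssum_ext (S n) _ (fun _ => 0)) in Hf.
        2:{ intros i Hi. unfold upd. destruct (Nat.eqb_spec i n); subst;
            replace (_ - _) with 0 by ring; apply Rabs_R0. }
        assert (ssum (S n) (fun _ => 0) = 0) as Z.
        { clear. induction (S n); simpl; auto. rewrite IHn0. ring. }
        rewrite Z, Rmult_0_r in Hf. apply abs0 in Hf. lra. }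
      rewrite E. destruct (Hcsf (c n)) as [_ Hm]. specialize (Hm c Hcb).
      specialize (Hxs1 (c n) (Hc n ltac:(lia))). unfold h in *. lra.
Qed.

Lemma dterm_cos (c k w : R) :
  derivable_pt_lim (fun w => c * cos (k * w)) w (- c * k * sin (k * w)).
Proof.
  pose proof (derivable_pt_lim_scal id k w 1 (derivable_pt_lim_id w)) as H1.
  pose proof (derivable_pt_lim_comp _ cos w _ _ H1 (derivable_pt_lim_cos _)) as H2.
  pose proof (derivable_pt_lim_scal _ c w _ H2) as H3.
  unfold mult_real_fct, comp, id in H3. simpl in H3.
  replace (- c * k * sin (k * w)) with (c * (- sin (k * w) * (k * 1))) by ring.
  exact H3.
Qed.

Lemma dterm_sin (c k w : R) :
  derivable_pt_lim (fun w => c * sin (k * w)) w (c * k * cos (k * w)).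
Proof.
  pose proof (derivable_pt_lim_scal id k w 1 (derivable_pt_lim_id w)) as H1.
  pose proof (derivable_pt_lim_comp _ sin w _ _ H1 (derivable_pt_lim_sin _)) as H2.
  pose proof (derivable_pt_lim_scal _ c w _ H2) as H3.
  unfold mult_real_fct, comp, id in H3. simpl in H3.
  replace (c * k * cos (k * w)) with (c * (cos (k * w) * (k * 1))) by ring.
  exact H3.
Qed.

Definition D1 N c w := sum_f_R0 (fun n => - c n * INR n * sin (INR n * w)) N.
Definition D2 N c w := sum_f_R0 (fun n => - c n * (INR n)^2 * cos (INR n * w)) N.

Lemma cospoly_d1 N c w : derivable_pt_lim (cospoly N c) w (D1 N c w).
Proof.
  induction N.
  - unfold cospoly, D1; simpl. apply dterm_cos.
  - unfold cospoly, D1 in *; simpl.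
    apply (derivable_pt_lim_plus (fun w => sum_f_R0 (fun n => c n * cos (INR n * w)) N)
       (fun w => c (S N) * cos (INR (S N) * w))); auto. apply dterm_cos.
Qed.

Lemma D1_d2 N c w : derivable_pt_lim (D1 N c) w (D2 N c w).
Proof.
  assert (T : forall n, derivable_pt_lim (fun w => - c n * INR n * sin (INR n * w)) w
     (- c n * (INR n)^2 * cos (INR n * w))).
  { intros n. replace (- c n * INR n ^ 2 * cos (INR n * w)) with
     ((- c n * INR n) * INR n * cos (INR n * w)) by ring. apply dterm_sin. }
  induction N.
  - unfold D2, D1; simpl. apply T.
  - unfold D2, D1 in *; simpl.
    apply (derivable_pt_lim_plus (fun w => sum_f_R0 (fun n => - c n * INR n * sin (INR n * w)) N)
       (fun w => - c (S N) * INR (S N) * sin (INR (S N) * w))); auto.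
Qed.

Lemma deriv_zero f a b x l : a < x < b -> (forall w, a < w < b -> f w = 0) ->
  derivable_pt_lim f x l -> l = 0.
Proof.
  intros Hx Hz Hd. destruct (Req_dec l 0) as [|Hl]; auto. exfalso.
  assert (Hp : 0 < Rabs l) by (apply Rabs_pos_lt; auto).
  destruct (Hd (Rabs l) Hp) as [del Hdel].
  set (h := Rmin del (Rmin (x - a) (b - x)) / 2).
  assert (Hm1 := Rmin_l del (Rmin (x - a) (b - x))).
  assert (Hm2 := Rmin_r del (Rmin (x - a) (b - x))).
  assert (Hm3 := Rmin_l (x - a) (b - x)). assert (Hm4 := Rmin_r (x - a) (b - x)).
  assert (Hpos : 0 < Rmin del (Rmin (x - a) (b - x))).
  { apply Rmin_pos. apply cond_pos. apply Rmin_pos; lra. }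
  assert (h0 : 0 < h) by (unfold h; lra).
  specialize (Hdel h ltac:(lra)).
  rewrite Rabs_pos_eq in Hdel by lra.
  assert (Hdel' : h < del) by (unfold h; lra). specialize (Hdel Hdel').
  rewrite (Hz x) in Hdel by lra. rewrite (Hz (x + h)) in Hdel by (unfold h; lra).
  replace ((0 - 0) / h - l) with (- l) in Hdel by (field; lra).
  rewrite Rabs_Ropp in Hdel. lra.
Qed.

Lemma sum_zero g M : (forall i, (i <= M)%nat -> g i = 0) -> sum_f_R0 g M = 0.
Proof. induction M; simpl; intros H. apply H; lia. rewrite IHM, H by (intros; try apply H; lia). ring. Qed.

Lemma D2_comb N c w K :
  sum_f_R0 (fun n => c n * (K - INR n ^ 2) * cos (INR n * w)) N = D2 N c w + K * cospoly N c w.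
Proof. unfold D2, cospoly. induction N. simpl. ring. rewrite !tech5, IHN. ring. Qed.

Lemma inj N : forall c a b, a < b -> (forall w, a < w < b -> cospoly N c w = 0) ->
  forall i, (i <= N)%nat -> c i = 0.
Proof.
  induction N; intros c a b Hab Hz i Hi.
  - assert (i = 0%nat) by lia. subst. specialize (Hz ((a+b)/2) ltac:(lra)).
    unfold cospoly in Hz; simpl in Hz. rewrite Rmult_0_l, cos_0 in Hz. lra.
  - assert (H1 : forall w, a < w < b -> D1 (S N) c w = 0).
    { intros w Hw. eapply (deriv_zero (cospoly (S N) c) a b w); eauto. apply cospoly_d1. }
    assert (H2 : forall w, a < w < b -> D2 (S N) c w = 0).
    { intros w Hw. eapply (deriv_zero (D1 (S N) c) a b w); eauto. apply D1_d2. }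
    set (c2 := fun n => c n * (INR (S N) ^ 2 - INR n ^ 2)).
    assert (H3 : forall w, a < w < b -> cospoly N c2 w = 0).
    { intros w Hw. pose proof (D2_comb (S N) c w (INR (S N) ^ 2)) as E.
      rewrite H2, Hz in E by auto. rewrite tech5 in E. unfold cospoly, c2.
      replace (INR (S N) ^ 2 - INR (S N) ^ 2) with 0 in E by ring.
      rewrite Rmult_0_r, Rmult_0_l, Rplus_0_r in E. rewrite E. ring. }
    assert (Hlow : forall j, (j <= N)%nat -> c j = 0).
    { intros j Hj. pose proof (IHN c2 a b Hab H3 j Hj) as E. unfold c2 in E.
      apply Rmult_integral in E. destruct E as [E|E]; auto. exfalso.
      assert (INR j < INR (S N)) by (apply lt_INR; lia).
      pose proof (pos_INR j). nra. }
    destruct (Nat.eq_dec i (S N)) as [->|]; [|apply Hlow; lia].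
    destruct (Req_dec (c (S N)) 0) as [|Hc]; auto. exfalso.
    set (x := (a + b) / 2).
    assert (Hx : a < x < b) by (unfold x; lra).
    specialize (H1 x Hx). specialize (Hz x Hx).
    unfold D1, cospoly in *. rewrite tech5 in H1, Hz.
    rewrite sum_zero in H1 by (intros j Hj; rewrite Hlow by auto; ring).
    rewrite sum_zero in Hz by (intros j Hj; rewrite Hlow by auto; ring).
    pose proof (sin2_cos2 (INR (S N) * x)).
    assert (Hn : INR (S N) <> 0) by (apply not_0_INR; lia).
    assert (cos (INR (S N) * x) = 0).
    { rewrite Rplus_0_l in Hz. apply Rmult_integral in Hz. destruct Hz; [contradiction|]. auto. }
    assert (sin (INR (S N) * x) = 0).
    { assert (E : c (S N) * INR (S N) * sin (INR (S N) * x) = 0) by lra.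
      apply Rmult_integral in E. destruct E as [E|E]; auto.
      apply Rmult_integral in E; tauto. }
    unfold Rsqr in H. rewrite H0, H4 in H. lra.
Qed.

Lemma cospoly_cont N c w : continuity_pt (cospoly N c) w.
Proof. apply derivable_continuous_pt. exists (D1 N c w). apply cospoly_d1. Qed.

Lemma abs_cont (f : R -> R) w : continuity_pt f w -> continuity_pt (fun x => Rabs (f x)) w.
Proof. intros H. apply (continuity_pt_comp f Rabs w H). apply Rcontinuity_abs. Qed.

Lemma cospoly_diff N c c' w :
  cospoly N c w - cospoly N c' w = sum_f_R0 (fun n => (c n - c' n) * cos (INR n * w)) N.
Proof. unfold cospoly. induction N. simpl; ring. rewrite !tech5, <- IHN. ring. Qed.

Lemma cospoly_lip N c c' w :
  Rabs (cospoly N c w - cospoly N c' w) <= ssum (S N) (fun i => Rabs (c i - c' i)).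
Proof.
  rewrite cospoly_diff, <- ssum_sumf. eapply Rle_trans. apply sum_f_R0_triangle.
  apply sum_Rle. intros n _. rewrite Rabs_mult.
  pose proof (COS_bound (INR n * w)). assert (Rabs (cos (INR n * w)) <= 1) by (apply Rabs_le; lra).
  pose proof (Rabs_pos (c n - c' n)). nra.
Qed.

Lemma cospoly_div N c d w : cospoly N (fun i => c i / d) w = cospoly N c w / d.
Proof. unfold cospoly, Rdiv. induction N. simpl; ring. rewrite !tech5, IHN. ring. Qed.

Lemma cospoly_zero N c w : (forall i, (i <= N)%nat -> c i = 0) -> cospoly N c w = 0.
Proof. intros H. unfold cospoly. apply sum_zero. intros i Hi. rewrite H by auto. ring. Qed.

Lemma argmax n (g : nat -> R) : exists k, (k <= n)%nat /\ forall i, (i <= n)%nat -> g i <= g k.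
Proof.
  induction n.
  - exists 0%nat. split. lia. intros i Hi. assert (i = 0%nat) by lia. subst; lra.
  - destruct IHn as [k [Hk Hm]]. destruct (Rle_dec (g (S n)) (g k)).
    + exists k. split. lia. intros i Hi. destruct (Nat.eq_dec i (S n)). subst; auto. apply Hm; lia.
    + exists (S n). split. lia. intros i Hi. destruct (Nat.eq_dec i (S n)). subst; lra.
      pose proof (Hm i ltac:(lia)). lra.
Qed.

Lemma finmin (P : nat -> R -> Prop) N :
  (forall k a a', P k a -> 0 < a' <= a -> P k a') ->
  (forall k, (k <= N)%nat -> exists a, 0 < a /\ P k a) ->
  exists a, 0 < a /\ forall k, (k <= N)%nat -> P k a.
Proof.
  intros Hmono Hk. induction N.
  - destruct (Hk 0%nat ltac:(lia)) as [a [Ha Hp]]. exists a. split; auto.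
    intros k Hk'. assert (k = 0%nat) by lia. subst; auto.
  - destruct IHN as [a [Ha Hp]]. intros k Hk'. apply Hk. lia.
    destruct (Hk (S N) ltac:(lia)) as [b [Hb Hpb]].
    exists (Rmin a b). split. apply Rmin_pos; auto.
    pose proof (Rmin_l a b). pose proof (Rmin_r a b). pose proof (Rmin_pos a b Ha Hb).
    intros k Hk'. destruct (Nat.eq_dec k (S N)). subst. eapply Hmono; eauto.
    eapply Hmono. apply Hp. lia. lra.
Qed.

Section Coerc.
Variables (N : nat) (a b : R).
Hypothesis Hab : a < b.

Definition phiP c v := (exists w, a <= w <= b /\ Rabs (cospoly N c w) = v) /\
   forall w, a <= w <= b -> Rabs (cospoly N c w) <= v.
Definition phi c := epsilon (inhabits 0) (phiP c).

Lemma phi_spec c : phiP c (phi c).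
Proof.
  unfold phi. apply epsilon_spec.
  destruct (continuity_ab_maj (fun w => Rabs (cospoly N c w)) a b) as [M [HM1 HM2]].
  lra. intros; apply abs_cont, cospoly_cont.
  exists (Rabs (cospoly N c M)). split; eauto.
Qed.

Lemma phi_lip c c' : Rabs (phi c - phi c') <= 1 * ssum (S N) (fun i => Rabs (c i - c' i)).
Proof.
  assert (G : forall c c', phi c <= phi c' + ssum (S N) (fun i => Rabs (c i - c' i))).
  { intros c1 c2. destruct (phi_spec c1) as [[w [Hw E]] _]. destruct (phi_spec c2) as [_ B2].
    rewrite <- E. specialize (B2 w Hw). pose proof (cospoly_lip N c1 c2 w).
    pose proof (Rabs_triang_inv (cospoly N c1 w) (cospoly N c2 w)). lra. }
  rewrite Rmult_1_l. apply Rabs_le. pose proof (G c c'). pose proof (G c' c).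
  rewrite (ssum_ext _ (fun i => Rabs (c' i - c i)) (fun i => Rabs (c i - c' i))) in H0
    by (intros; apply Rabs_minus_sym). lra.
Qed.

Definition lof k := fun j => if Nat.eqb j k then 1 else -1.

Lemma coerc : exists al, 0 < al /\ forall c, exists w, a <= w <= b /\
   forall i, (i <= N)%nat -> al * Rabs (c i) <= Rabs (cospoly N c w).
Proof.
  assert (Hf : forall k, (k <= N)%nat -> exists al, 0 < al /\
      (fun k al => forall c, inbox (S N) (lof k) (fun _ => 1) c -> al <= phi c) k al).
  { intros k Hk. destruct (min_box (S N) phi 1 (lof k) (fun _ => 1)) as [cs [Hcs Hmin]].
    { intros i. unfold lof. destruct (Nat.eqb i k); lra. }
    apply phi_lip.
    exists (phi cs). split; auto.
    destruct (phi_spec cs) as [_ Hb].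
    assert (H0 : 0 <= phi cs) by (eapply Rle_trans; [apply Rabs_pos| apply (Hb a)]; lra).
    destruct H0 as [|H0]; auto. exfalso.
    assert (Z : forall w, a < w < b -> cospoly N cs w = 0).
    { intros w Hw. specialize (Hb w ltac:(lra)). rewrite <- H0 in Hb. apply abs0; auto. }
    pose proof (inj N cs a b Hab Z k Hk). specialize (Hcs k ltac:(lia)).
    unfold lof in Hcs. rewrite Nat.eqb_refl in Hcs. lra. }
  destruct (finmin (fun k al => forall c, inbox (S N) (lof k) (fun _ => 1) c -> al <= phi c) N)
     as [al [Hal Hall]].
  { intros k0 a0 a1 H Ha c Hc. specialize (H c Hc). lra. }
  exact Hf.
  exists al. split; auto. intros c.
  destruct (phi_spec c) as [[w [Hw E]] Bc]. exists w. split; auto.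
  destruct (argmax N (fun i => Rabs (c i))) as [k [Hk Hmax]]. simpl in Hmax.
  destruct (Req_dec (c k) 0) as [Hz|Hnz].
  { intros i Hi. specialize (Hmax i Hi). rewrite Hz, Rabs_R0 in Hmax.
    pose proof (Rabs_pos (c i)). assert (Rabs (c i) = 0) by lra. rewrite H0, Rmult_0_r. apply Rabs_pos. }
  set (c' := fun i => c i / c k).
  assert (Hin : inbox (S N) (lof k) (fun _ => 1) c').
  { intros i Hi. unfold c', lof. destruct (Nat.eqb_spec i k).
    - subst. rewrite Rdiv_diag by auto. lra.
    - assert (Rabs (c i / c k) <= 1).
      { unfold Rdiv. rewrite Rabs_mult, Rabs_inv. specialize (Hmax i ltac:(lia)).
        pose proof (Rabs_pos_lt _ Hnz). apply Rmult_le_reg_r with (Rabs (c k)); auto.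
        rewrite Rmult_assoc, Rinv_l by lra. lra. }
      apply absle in H. lra. }
  pose proof (Hall k Hk c' Hin) as Hc'.
  destruct (phi_spec c') as [[w' [Hw' E']] _].
  assert (Ed : cospoly N c' w' = cospoly N c w' * / c k) by apply cospoly_div.
  rewrite Ed, Rabs_mult, Rabs_inv in E'.
  specialize (Bc w' Hw').
  pose proof (Rabs_pos_lt _ Hnz).
  assert (al * Rabs (c k) <= Rabs (cospoly N c w)).
  { rewrite E. apply Rle_trans with (phi c' * Rabs (c k)).
    apply Rmult_le_compat_r; lra.
    rewrite <- E'. rewrite Rmult_assoc, Rinv_l by lra. lra. }
  intros i Hi. specialize (Hmax i Hi). nra.
Qed.
End Coerc.

Lemma band_max L (g : R -> R) : (forall p, In p L -> fst p <= snd p) -> L <> nil ->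
  (forall w, continuity_pt g w) ->
  exists w0, in_band L w0 /\ forall w, in_band L w -> g w <= g w0.
Proof.
  intros HL Hne Hc. induction L as [|p L IH]. congruence.
  destruct (continuity_ab_maj g (fst p) (snd p)) as [M [HM1 HM2]].
  apply HL; simpl; auto. intros; auto.
  destruct L as [|q L'].
  - exists M. split. exists p; simpl; auto.
    intros w [p' [Hin Hw]]. destruct Hin as [<-|[]]. auto.
  - destruct IH as [w1 [Hw1 Hm1]]. intros; apply HL; simpl in *; tauto. congruence.
    destruct (Rle_dec (g M) (g w1)).
    + exists w1. split. destruct Hw1 as [p' [Hp' Hw']]. exists p'. simpl in *. tauto.
      intros w [p' [Hin Hw]]. destruct Hin as [<-|Hin]. specialize (HM1 w Hw). lra.
      apply Hm1. exists p'; auto.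
    + exists M. split. exists p; simpl; auto.
      intros w [p' [Hin Hw]]. destruct Hin as [<-|Hin]. auto.
      assert (g w <= g w1) by (apply Hm1; exists p'; auto). lra.
Qed.

Section MM.
Variables (LP LS : list (R * R)) (N : nat).
Hypothesis HP : good_band LP.
Hypothesis HS : good_band LS.
Hypothesis Hdisj : forall w, ~ (in_band LP w /\ in_band LS w).

Lemma werr_P K c w : in_band LP w -> werr LP N K c w = Rabs (cospoly N c w - 1).
Proof. intros H. unfold werr, Wght, Dresp. destruct (excluded_middle_informative (in_band LP w)).
  f_equal; ring. contradiction. Qed.

Lemma werr_S K c w : in_band LS w -> werr LP N K c w = Rabs (K * cospoly N c w).
Proof. intros H. unfold werr, Wght, Dresp. destruct (excluded_middle_informative (in_band LP w)).
  exfalso; apply (Hdisj w); auto. f_equal; ring. Qed.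

Lemma werr_nonneg K c w : 0 <= werr LP N K c w.
Proof. apply Rabs_pos. Qed.

Lemma max_exists K c : exists e, is_max_err LP LS N K c e.
Proof.
  destruct HP as [HPn HPi]. destruct HS as [HSn HSi].
  destruct (band_max LP (fun w => Rabs (cospoly N c w - 1))) as [w1 [Hw1 Hm1]]; auto.
  { intros p Hp; specialize (HPi p Hp); lra. }
  { intros w. apply abs_cont. apply continuity_pt_minus. apply cospoly_cont. apply continuity_pt_const. intros x y; auto. }
  destruct (band_max LS (fun w => Rabs (K * cospoly N c w))) as [w2 [Hw2 Hm2]]; auto.
  { intros p Hp; specialize (HSi p Hp); lra. }
  { intros w. apply abs_cont. apply continuity_pt_scal. apply cospoly_cont. }
  simpl in *.
  destruct (Rle_dec (Rabs (cospoly N c w1 - 1)) (Rabs (K * cospoly N c w2))).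
  - exists (Rabs (K * cospoly N c w2)). split.
    + intros w [Hw|Hw]. rewrite werr_P by auto. specialize (Hm1 w Hw). lra.
      rewrite werr_S by auto. auto.
    + exists w2. split; auto. apply werr_S; auto.
  - exists (Rabs (cospoly N c w1 - 1)). split.
    + intros w [Hw|Hw]. rewrite werr_P by auto. auto.
      rewrite werr_S by auto. specialize (Hm2 w Hw). lra.
    + exists w1. split; auto. apply werr_P; auto.
Qed.

Lemma max_unique K c e e' : is_max_err LP LS N K c e -> is_max_err LP LS N K c e' -> e = e'.
Proof.
  intros [B1 [w1 [H1 E1]]] [B2 [w2 [H2 E2]]].
  specialize (B1 w2 H2). specialize (B2 w1 H1). lra.
Qed.

Lemma werr_lip K c c' w : 0 < K -> (in_band LP w \/ in_band LS w) ->
  werr LP N K c w <= werr LP N K c' w + (1 + K) * ssum (S N) (fun i => Rabs (c i - c' i)).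
Proof.
  intros HK Hw. pose proof (cospoly_lip N c c' w) as L.
  pose proof (Rabs_pos (cospoly N c w - cospoly N c' w)).
  set (S0 := ssum (S N) (fun i => Rabs (c i - c' i))) in *.
  assert (S0 <= (1 + K) * S0) by nra. assert (K * S0 <= (1 + K) * S0) by nra.
  destruct Hw as [Hw|Hw].
  - rewrite !werr_P by auto.
    pose proof (Rabs_triang (cospoly N c' w - 1) (cospoly N c w - cospoly N c' w)) as T.
    replace (cospoly N c' w - 1 + (cospoly N c w - cospoly N c' w)) with (cospoly N c w - 1) in T by ring.
    lra.
  - rewrite !werr_S by auto.
    pose proof (Rabs_triang (K * cospoly N c' w) (K * (cospoly N c w - cospoly N c' w))) as T.
    replace (K * cospoly N c' w + K * (cospoly N c w - cospoly N c' w)) with (K * cospoly N c w) in T by ring.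
    rewrite !Rabs_mult, !(Rabs_pos_eq K) in * by lra.
    assert (K * Rabs (cospoly N c w - cospoly N c' w) <= K * S0) by (apply Rmult_le_compat_l; lra).
    lra.
Qed.

Definition Emax K c := epsilon (inhabits 0) (is_max_err LP LS N K c).
Lemma Emax_spec K c : is_max_err LP LS N K c (Emax K c).
Proof. unfold Emax. apply epsilon_spec. apply max_exists. Qed.

Lemma Emax_lip K c c' : 0 < K -> Rabs (Emax K c - Emax K c') <= (1 + K) * ssum (S N) (fun i => Rabs (c i - c' i)).
Proof.
  intros HK.
  assert (G : forall c c', Emax K c <= Emax K c' + (1 + K) * ssum (S N) (fun i => Rabs (c i - c' i))).
  { intros c1 c2. destruct (Emax_spec K c1) as [_ [w [Hw E]]]. destruct (Emax_spec K c2) as [B _].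
    rewrite <- E. pose proof (werr_lip K c1 c2 w HK Hw). specialize (B w Hw). lra. }
  apply Rabs_le. pose proof (G c c'). pose proof (G c' c).
  rewrite (ssum_ext _ (fun i => Rabs (c' i - c i)) (fun i => Rabs (c i - c' i))) in H0
    by (intros; apply Rabs_minus_sym). lra.
Qed.

Lemma minimax_exists K : 0 < K -> exists d, is_minimax LP LS N K d.
Proof.
  intros HK. pose proof HP as [HPn HPi].
  assert (Hex : exists p, In p LP) by (destruct LP as [|p l]; [congruence| exists p; simpl; auto]).
  destruct Hex as [p Hpin].
  destruct (HPi p Hpin) as [_ [Hp _]].
  destruct (coerc N (fst p) (snd p) Hp) as [al [Hal Hco]].
  set (M := 2 / al).
  destruct (min_box (S N) (Emax K) (1 + K) (fun _ => - M) (fun _ => M)) as [cs [Hcs Hmin]].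
  { intros; unfold M. assert (0 < 2/al) by (apply Rdiv_lt_0_compat; lra). lra. }
  { intros; apply Emax_lip; auto. }
  exists (Emax K cs). split. exists cs. apply Emax_spec.
  intros c e He. rewrite <- (max_unique K c _ _ (Emax_spec K c) He).
  destruct (classic (inbox (S N) (fun _ => - M) (fun _ => M) c)) as [Hin|Hout]. auto.
  assert (H0 : Emax K (fun _ => 0) <= 1).
  { destruct (Emax_spec K (fun _ => 0)) as [_ [w [Hw E]]]. rewrite <- E.
    unfold werr, Wght, Dresp. rewrite cospoly_zero by auto.
    destruct (excluded_middle_informative (in_band LP w)).
    unfold Rabs; destruct Rcase_abs; lra.
    replace (K * (0 - 0)) with 0 by ring. rewrite Rabs_R0. lra. }
  assert (Hz : Emax K cs <= Emax K (fun _ => 0)).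
  { apply Hmin. intros i Hi. unfold M. assert (0 < 2/al) by (apply Rdiv_lt_0_compat; lra). lra. }
  apply Rle_trans with 1; [lra|].
  apply NNPP; intro Hlt. apply Hout. intros i Hi.
  destruct (Hco c) as [w [Hw Hb]].
  destruct (Emax_spec K c) as [B _].
  assert (Hwp : in_band LP w) by (exists p; simpl; auto).
  specialize (B w (or_introl Hwp)). rewrite werr_P in B by auto.
  specialize (Hb i ltac:(lia)).
  pose proof (Rabs_triang_inv (cospoly N c w) 1). rewrite Rabs_R1 in H.
  assert (Rabs (c i) * al <= 2) by lra.
  assert (Rabs (c i) <= M).
  { unfold M. apply Rmult_le_reg_r with al; auto. unfold Rdiv. rewrite Rmult_assoc, Rinv_l by lra. lra. }
  apply absle in H2. lra.
Qed.

Lemma dres_spec K : 0 < K -> is_minimax LP LS N K (Delta_P_res LP LS N K).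
Proof. intros HK. unfold Delta_P_res. apply epsilon_spec. apply minimax_exists; auto. Qed.

End MM.

Section Props.
Variables (LP LS : list (R * R)) (N : nat).
Hypothesis HP : good_band LP.
Hypothesis HS : good_band LS.
Hypothesis Hdisj : forall w, ~ (in_band LP w /\ in_band LS w).
Let d K := Delta_P_res LP LS N K.

Lemma d_mono K K' : 0 < K <= K' -> d K <= d K'.
Proof.
  intros HK. destruct (dres_spec LP LS N HP HS Hdisj K' ltac:(lra)) as [[c' [B' _]] _].
  destruct (max_exists LP LS N HP HS Hdisj K c') as [e He].
  destruct (dres_spec LP LS N HP HS Hdisj K ltac:(lra)) as [_ Hmin].
  specialize (Hmin c' e He). unfold d. apply Rle_trans with e; auto.
  destruct He as [_ [w [Hw E]]]. rewrite <- E. specialize (B' w Hw).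
  eapply Rle_trans; [|exact B'].
  destruct Hw as [Hw|Hw].
  - rewrite !werr_P by auto. lra.
  - rewrite !(werr_S LP LS N Hdisj) by auto. rewrite !Rabs_mult, !(Rabs_pos_eq K), (Rabs_pos_eq K') by lra.
    pose proof (Rabs_pos (cospoly N c' w)). nra.
Qed.

Lemma d_scale K K' : 0 < K <= K' -> d K' <= K' / K * d K.
Proof.
  intros HK. destruct (dres_spec LP LS N HP HS Hdisj K ltac:(lra)) as [[c [B _]] _].
  destruct (max_exists LP LS N HP HS Hdisj K' c) as [e He].
  destruct (dres_spec LP LS N HP HS Hdisj K' ltac:(lra)) as [_ Hmin].
  specialize (Hmin c e He). unfold d. apply Rle_trans with e; auto.
  destruct He as [_ [w [Hw E]]]. rewrite <- E. specialize (B w Hw).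
  assert (Hq : 1 <= K' / K).
  { apply Rmult_le_reg_r with K. lra. unfold Rdiv. rewrite Rmult_assoc, Rinv_l by lra. lra. }
  destruct Hw as [Hw|Hw].
  - rewrite !werr_P in * by auto.
    pose proof (Rabs_pos (cospoly N c w - 1)). nra.
  - rewrite !(werr_S LP LS N Hdisj) in * by auto. rewrite !Rabs_mult, !(Rabs_pos_eq K), (Rabs_pos_eq K') in * by lra.
    replace (K' * Rabs (cospoly N c w)) with (K' / K * (K * Rabs (cospoly N c w))) by (field; lra).
    apply Rmult_le_compat_l; lra.
Qed.

Lemma d_pos K : 0 < K -> 0 < d K.
Proof.
  intros HK. destruct (dres_spec LP LS N HP HS Hdisj K HK) as [[c [B _]] _].
  unfold d. apply Rnot_le_lt. intros Hle.
  pose proof HS as [HSn HSi].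
  assert (Hex : exists p, In p LS) by (destruct LS as [|p l]; [congruence| exists p; simpl; auto]).
  destruct Hex as [p Hp]. destruct (HSi p Hp) as [_ [Hab _]].
  assert (Z : forall w, fst p < w < snd p -> cospoly N c w = 0).
  { intros w Hw. assert (in_band LS w) by (exists p; split; auto; lra).
    specialize (B w (or_intror H)). rewrite (werr_S LP LS N Hdisj) in B by auto.
    rewrite Rabs_mult, Rabs_pos_eq in B by lra.
    pose proof (Rabs_pos (cospoly N c w)).
    assert (Rabs (cospoly N c w) <= 0) by nra. apply abs0; auto. }
  pose proof (inj N c _ _ Hab Z) as Hc.
  pose proof HP as [HPn HPi].
  assert (Hex : exists q, In q LP) by (destruct LP as [|q l]; [congruence| exists q; simpl; auto]).
  destruct Hex as [q Hq]. destruct (HPi q Hq) as [_ [Hq2 _]].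
  assert (Hw : in_band LP (fst q)) by (exists q; split; auto; lra).
  specialize (B _ (or_introl Hw)). rewrite werr_P in B by auto.
  rewrite cospoly_zero in B by auto.
  revert B. unfold Rabs; destruct Rcase_abs; lra.
Qed.

Lemma cospoly_c0 M t w : cospoly M (fun n => if Nat.eqb n 0 then t else 0) w = t.
Proof. unfold cospoly. induction M. simpl. rewrite Rmult_0_l, cos_0. ring.
  rewrite tech5, IHM. simpl. ring. Qed.

Lemma d_le K : 0 < K -> d K <= K / (K + 1).
Proof.
  intros HK. set (c0 := fun n => if Nat.eqb n 0 then 1 / (K + 1) else 0).
  destruct (max_exists LP LS N HP HS Hdisj K c0) as [e He].
  destruct (dres_spec LP LS N HP HS Hdisj K HK) as [_ Hmin].
  specialize (Hmin c0 e He). unfold d. apply Rle_trans with e; auto.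
  destruct He as [_ [w [Hw E]]]. rewrite <- E. unfold c0.
  destruct Hw as [Hw|Hw].
  - rewrite werr_P by auto. rewrite cospoly_c0.
    replace (1 / (K + 1) - 1) with (- (K / (K + 1))) by (field; lra).
    rewrite Rabs_Ropp, Rabs_pos_eq. lra. apply Rlt_le, Rdiv_lt_0_compat; lra.
  - rewrite (werr_S LP LS N Hdisj) by auto. rewrite cospoly_c0.
    replace (K * (1 / (K + 1))) with (K / (K + 1)) by (field; lra).
    rewrite Rabs_pos_eq. lra. apply Rlt_le, Rdiv_lt_0_compat; lra.
Qed.

Lemma d_cont K : 0 < K -> continuity_pt d K.
Proof.
  intros HK. apply (lip_cont d K (K / 2) (2 / K)). lra.
  intros y Hy. apply Rlt_le, absle in Hy as [Hy1 Hy2].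
  assert (Hy0 : 0 < y) by lra.
  destruct (Rle_dec K y).
  - pose proof (d_mono K y ltac:(lra)). pose proof (d_scale K y ltac:(lra)).
    pose proof (d_le K HK). pose proof (d_pos K HK).
    assert (K / (K + 1) <= 1) by (apply Rmult_le_reg_r with (K+1); [lra|]; unfold Rdiv; rewrite Rmult_assoc, Rinv_l by lra; lra).
    rewrite Rabs_pos_eq by lra. rewrite (Rabs_pos_eq (y - K)) by lra.
    assert (E : y / K * d K - d K = (y - K) / K * d K) by (field; lra).
    assert ((y - K) / K * d K <= (y - K) / K * 1).
    { apply Rmult_le_compat_l. apply Rmult_le_pos. lra. apply Rlt_le, Rinv_0_lt_compat; lra. lra. }
    assert ((y - K) / K <= 2 / K * (y - K)) by (unfold Rdiv; assert (0 < / K) by (apply Rinv_0_lt_compat; lra); nra).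
    lra.
  - pose proof (d_mono y K ltac:(lra)). pose proof (d_scale y K ltac:(lra)).
    pose proof (d_le y Hy0). pose proof (d_pos y Hy0).
    assert (y / (y + 1) <= 1) by (apply Rmult_le_reg_r with (y+1); [lra|]; unfold Rdiv; rewrite Rmult_assoc, Rinv_l by lra; lra).
    rewrite Rabs_minus_sym, Rabs_pos_eq by lra. rewrite (Rabs_minus_sym y K), (Rabs_pos_eq (K - y)) by lra.
    assert (E : K / y * d y - d y = (K - y) / y * d y) by (field; lra).
    assert ((K - y) / y * d y <= (K - y) / y * 1).
    { apply Rmult_le_compat_l. apply Rmult_le_pos. lra. apply Rlt_le, Rinv_0_lt_compat; lra. lra. }
    assert ((K - y) / y <= 2 / K * (K - y)).
    { unfold Rdiv. apply Rmult_le_reg_r with (y * K). nra.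
      replace ((K - y) * / y * (y * K)) with ((K - y) * K) by (field; lra).
      replace (2 * / K * (K - y) * (y * K)) with (2 * y * (K - y)) by (field; lra). nra. }
    lra.
Qed.

End Props.

Section DP.
Variable Kd : R.
Hypothesis HKd : 0 < Kd.
Let L0 := 4 * Kd * (Kd + 1).

Lemma den_pos K : L0 <= K -> 0 < K ^ 2 + 16 * Kd ^ 4 - 8 * Kd ^ 2.
Proof.
  intros H. unfold L0 in *. assert (0 < 4 * Kd * (Kd + 1)) by nra.
  assert (K * K >= (4 * Kd * (Kd + 1)) * (4 * Kd * (Kd + 1))) by nra.
  assert (0 < Kd * Kd) by nra. nra.
Qed.

Lemma DP_L0 : Delta_P Kd L0 = L0 / (L0 + 1).
Proof.
  pose proof (den_pos L0 (Rle_refl _)). unfold Delta_P, L0 in *.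
  field. split; nra.
Qed.

Lemma DP_dec K K' : L0 <= K < K' -> Delta_P Kd K' < Delta_P Kd K.
Proof.
  intros H. pose proof (den_pos K ltac:(lra)). pose proof (den_pos K' ltac:(lra)).
  unfold Delta_P. set (a := 16 * Kd ^ 4 - 8 * Kd ^ 2) in *.
  assert (Ha : K * K' > a).
  { unfold L0, a in *. assert (0 < 4 * Kd * (Kd + 1)) by nra.
    assert (K * K' >= (4 * Kd * (Kd + 1)) * (4 * Kd * (Kd + 1))) by nra. nra. }
  replace (K ^ 2 + 16 * Kd ^ 4 - 8 * Kd ^ 2) with (K^2 + a) in * by (unfold a; ring).
  replace (K' ^ 2 + 16 * Kd ^ 4 - 8 * Kd ^ 2) with (K'^2 + a) in * by (unfold a; ring).
  unfold Rdiv. apply Rmult_lt_reg_r with ((K^2 + a) * (K'^2 + a)). nra.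
  replace (8 * Kd ^ 2 * K' * / (K' ^ 2 + a) * ((K ^ 2 + a) * (K' ^ 2 + a))) with
     (8 * Kd ^ 2 * K' * (K ^ 2 + a)) by (field; lra).
  replace (8 * Kd ^ 2 * K * / (K ^ 2 + a) * ((K ^ 2 + a) * (K' ^ 2 + a))) with
     (8 * Kd ^ 2 * K * (K' ^ 2 + a)) by (field; lra).
  assert (0 < Kd ^ 2) by nra.
  assert (0 < (K' - K) * (K * K' - a)) by (apply Rmult_lt_0_compat; lra).
  assert (0 < 8 * Kd ^ 2 * ((K' - K) * (K * K' - a))) by (apply Rmult_lt_0_compat; lra).
  assert (8 * Kd ^ 2 * K * (K' ^ 2 + a) - 8 * Kd ^ 2 * K' * (K ^ 2 + a) = 8 * Kd ^ 2 * ((K' - K) * (K * K' - a))) by ring.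
  lra.
Qed.

Lemma DP_small K : L0 <= K -> 2 <= K -> Delta_P Kd K <= 16 * Kd ^ 2 / K.
Proof.
  intros H1 H2. pose proof (den_pos K H1). unfold Delta_P.
  assert (Hd : K ^ 2 / 2 <= K ^ 2 + 16 * Kd ^ 4 - 8 * Kd ^ 2).
  { assert (0 <= (4 * Kd^2 - 1)^2) by (apply pow2_ge_0).
    assert (16 * Kd ^ 4 - 8 * Kd ^ 2 + 1 = (4 * Kd^2 - 1)^2) by ring.
    assert (K ^ 2 >= 4) by nra. lra. }
  unfold Rdiv. apply Rmult_le_reg_r with ((K ^ 2 + 16 * Kd ^ 4 - 8 * Kd ^ 2) * K). nra.
  replace (8 * Kd ^ 2 * K * / (K ^ 2 + 16 * Kd ^ 4 - 8 * Kd ^ 2) * ((K ^ 2 + 16 * Kd ^ 4 - 8 * Kd ^ 2) * K))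
    with (8 * Kd^2 * K * K) by (field; lra).
  replace (16 * Kd ^ 2 * / K * ((K ^ 2 + 16 * Kd ^ 4 - 8 * Kd ^ 2) * K))
    with (16 * Kd ^ 2 * (K ^ 2 + 16 * Kd ^ 4 - 8 * Kd ^ 2)) by (field; lra).
  assert (0 < Kd ^ 2) by nra. nra.
Qed.

Lemma DP_cont K : L0 <= K -> continuity_pt (Delta_P Kd) K.
Proof. intros H. pose proof (den_pos K H). unfold Delta_P. reg. lra. Qed.
End DP.

Theorem mainTheorem3 (N : nat) (Kdes : R) (LP LS : list (R * R)) :
  (1 <= N)%nat -> 0 < Kdes ->
  good_band LP -> good_band LS ->
  (forall w, ~ (in_band LP w /\ in_band LS w)) ->
  exists K0, 4 * Kdes * (Kdes + 1) <= K0 /\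
    Delta_P_res LP LS N K0 = Delta_P Kdes K0 /\
    (forall K, 4 * Kdes * (Kdes + 1) <= K ->
       Delta_P_res LP LS N K = Delta_P Kdes K -> K = K0) /\
    (forall K, 4 * Kdes * (Kdes + 1) <= K < K0 ->
       Delta_P_res LP LS N K < Delta_P Kdes K) /\
    (forall K, K0 < K -> Delta_P_res LP LS N K > Delta_P Kdes K).
Proof.
  intros HN HKd HP HS Hdisj.
  set (L0 := 4 * Kdes * (Kdes + 1)).
  assert (HL0 : 0 < L0) by (unfold L0; nra).
  set (d := Delta_P_res LP LS N).
  set (g := fun K => d K - Delta_P Kdes K).
  assert (Ginc : forall K K', L0 <= K < K' -> g K < g K').
  { intros K K' H. unfold g, d. pose proof (d_mono LP LS N HP HS Hdisj K K' ltac:(lra)).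
    pose proof (DP_dec Kdes HKd K K' H). lra. }
  assert (HgL0 : g L0 <= 0).
  { unfold g, d. rewrite DP_L0 by auto. pose proof (d_le LP LS N HP HS Hdisj L0 HL0). unfold L0 in *; lra. }
  set (del := d L0).
  assert (Hdel : 0 < del) by (apply d_pos; auto).
  set (Kb := L0 + 2 + 16 * Kdes ^ 2 / del).
  assert (Hq : 0 <= 16 * Kdes ^ 2 / del) by (apply Rlt_le, Rdiv_lt_0_compat; nra).
  assert (Hgb : 0 < g Kb).
  { unfold g. pose proof (DP_small Kdes HKd Kb ltac:(unfold Kb, L0 in *; lra) ltac:(unfold Kb, L0 in *; lra)).
    pose proof (d_mono LP LS N HP HS Hdisj L0 Kb ltac:(unfold Kb, L0 in *; lra)).
    assert (16 * Kdes ^ 2 / Kb < del).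
    { apply Rmult_lt_reg_r with Kb. unfold Kb; lra.
      unfold Rdiv. rewrite Rmult_assoc, Rinv_l by (unfold Kb; lra).
      assert (del * (16 * Kdes ^ 2 / del) = 16 * Kdes ^ 2) by (field; lra).
      unfold Kb. rewrite Rmult_plus_distr_l. unfold Rdiv in H1. assert (0 < del * (L0 + 2)) by (apply Rmult_lt_0_compat; lra). lra. }
    unfold del, d in *. lra. }
  assert (Hex : exists K0, L0 <= K0 /\ g K0 = 0).
  { destruct HgL0 as [Hlt|Heq]; [|exists L0; split; [lra|auto]].
    assert (Hc : forall a, L0 <= a <= Kb -> continuity_pt g a).
    { intros x Hx. unfold g. apply continuity_pt_minus.
      apply (d_cont LP LS N HP HS Hdisj x). lra. apply DP_cont; auto. unfold L0 in *; lra. }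
    destruct (Ranalysis5.IVT_interv g L0 Kb Hc ltac:(unfold Kb, L0 in *; lra) Hlt Hgb) as [z [Hz1 Hz2]].
    exists z. split; [lra|auto]. }
  destruct Hex as [K0 [HK0 Hg0]].
  exists K0. split; [auto|]. split. unfold g, d in *; cbv beta in *; lra.
  split; [|split].
  - intros K HK HE. destruct (Rtotal_order K K0) as [Hl|[He|Hl]]; auto.
    + pose proof (Ginc K K0 ltac:(lra)). unfold g, d in *; cbv beta in *; lra.
    + pose proof (Ginc K0 K ltac:(lra)). unfold g, d in *; cbv beta in *; lra.
  - intros K HK. pose proof (Ginc K K0 HK). unfold g, d in *; cbv beta in *; lra.
  - intros K HK. pose proof (Ginc K0 K ltac:(lra)). unfold g, d in *; cbv beta in *; lra.
Qed.
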